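(* Let $G$ be a graph and $\{\hat C,\hat I,\hat Q\}$ a partition of $V(G)$ (parts may be empty) such that: (1) $\hat C$ is a clique and $\hat I$ is an independent set; (2) $\hat Q$ is a clique or an independent set, and $|\hat Q|\ge2$; (3) every vertex of $\hat Q$ is adjacent to every vertex of $\hat C$ and to no vertex of $\hat I$; (4) if $\hat Q$ is a clique, every vertex of $\hat C$ has a neighbor in $\hat I$; (5) if $\hat Q$ is an independent set, every vertex of $\hat I$ has a non-neighbor in $\hat C$. Then $G$ is a split graph, and $\hat C$, $\hat I$, $\hat Q$ are respectively its always-clique set, always-independent set, and questioning set.
   Context: A split partition of a graph $G$ is an ordered pair $(C',I')$ of disjoint sets (possibly empty) with $C'\cup I'=V(G)$, $C'$ a clique and $I'$ an independent set; $G$ is a split graph if it has a split partition. The always-clique set of a split graph is the set of vertices lying in $C'$ for every split partition $(C',I')$; the always-independent set is the set of vertices lying in $I'$ for every split partition; the questioning set is the set of vertices $v$ for which there is a split partition with $v\in C'$ and a split partition with $v\in I'$. *)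

(* Defs.v *)
From mathcomp Require Import all_boot.
Set Implicit Arguments. Unset Strict Implicit. Unset Printing Implicit Defensive.

Definition simple_graph (T : finType) (e : rel T) : Prop :=
  symmetric e /\ irreflexive e.

Definition is_clique (T : finType) (e : rel T) (A : {set T}) : Prop :=
  forall x y, x \in A -> y \in A -> x != y -> e x y.

Definition is_independent (T : finType) (e : rel T) (A : {set T}) : Prop :=
  forall x y, x \in A -> y \in A -> ~~ e x y.

Definition split_partition (T : finType) (e : rel T) (C I : {set T}) : Prop :=
  [disjoint C & I] /\ C :|: I = [set: T] /\ is_clique e C /\ is_independent e I.

Definition is_split_graph (T : finType) (e : rel T) : Prop :=
  exists C I, split_partition e C I.

Definition in_always_clique (T : finType) (e : rel T) (v : T) : Prop :=
  forall C I, split_partition e C I -> v \in C.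

Definition in_always_independent (T : finType) (e : rel T) (v : T) : Prop :=
  forall C I, split_partition e C I -> v \in I.

Definition in_questioning (T : finType) (e : rel T) (v : T) : Prop :=
  (exists C I, split_partition e C I /\ v \in C) /\
  (exists C I, split_partition e C I /\ v \in I).

(* Main.v *)
Require Import Defs.
From mathcomp Require Import all_boot.

Lemma mk_sp (T : finType) (e : rel T) (C I : {set T}) :
  (forall x, x \in C -> x \in I -> False) -> (forall x, (x \in C) || (x \in I)) ->
  is_clique e C -> is_independent e I -> split_partition e C I.
Proof.
move=> H1 H2 H3 H4; split; last split=> //.
  apply/pred0P => x /=; apply/negbTE/negP => /andP[]; exact: H1.
by apply/setP => x; rewrite !inE H2.
Qed.

Lemma sp_cov (T : finType) (e : rel T) (C I : {set T}) x :
  split_partition e C I -> (x \in C) || (x \in I).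
Proof. by case=> _ [H _]; have := in_setT x; rewrite -H inE. Qed.

Lemma sp_dis (T : finType) (e : rel T) (C I : {set T}) x :
  split_partition e C I -> x \in C -> x \in I -> False.
Proof. by case=> H _ xC; rewrite (disjointFr H xC). Qed.

Arguments sp_cov {T e C I} x.
Arguments sp_dis {T e C I x}.

Theorem lemma8p5 (T : finType) (e : rel T) (Ch Ih Qh : {set T}) :
  simple_graph e ->
  (* {Ch, Ih, Qh} partition V(G) (parts may be empty) *)
  [disjoint Ch & Ih] -> [disjoint Ch & Qh] -> [disjoint Ih & Qh] ->
  Ch :|: Ih :|: Qh = [set: T] ->
  (* (1) *)
  is_clique e Ch -> is_independent e Ih ->
  (* (2) *)
  (is_clique e Qh \/ is_independent e Qh) -> 2 <= #|Qh| ->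
  (* (3) *)
  (forall q c, q \in Qh -> c \in Ch -> e q c) ->
  (forall q i, q \in Qh -> i \in Ih -> ~~ e q i) ->
  (* (4) *)
  (is_clique e Qh -> forall c, c \in Ch -> exists2 i, i \in Ih & e c i) ->
  (* (5) *)
  (is_independent e Qh -> forall i, i \in Ih -> exists2 c, c \in Ch & ~~ e i c) ->
  is_split_graph e /\
  (forall v, in_always_clique e v <-> v \in Ch) /\
  (forall v, in_always_independent e v <-> v \in Ih) /\
  (forall v, in_questioning e v <-> v \in Qh).
Proof.
move=> [sym irr] dCI dCQ dIQ cov cC iI hQ /card_gt1P [q1 [q2 [q1Q q2Q q12]]] hQC hQI h4 h5.
have cv x : [|| x \in Ch, x \in Ih | x \in Qh].
  by have := in_setT x; rewrite -cov !inE orbA.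
have nCI x : x \in Ch -> x \in Ih -> False by move=> a; rewrite (disjointFr dCI a).
have nCQ x : x \in Ch -> x \in Qh -> False by move=> a; rewrite (disjointFr dCQ a).
have nIQ x : x \in Ih -> x \in Qh -> False by move=> a; rewrite (disjointFr dIQ a).
have K1 : forall C I, split_partition e C I -> {subset Ch <= C} /\ {subset Ih <= I}.
  move=> C I sp.
  have [_ [_ [cl ind]]] := sp.
  have KC : {subset Ch <= C}.
    move=> c cCh; case/orP: (sp_cov c sp) => // cI; exfalso.
    have qC q : q \in Qh -> q \in C.
      move=> qQ; case/orP: (sp_cov q sp) => // qI.
      by have := ind _ _ cI qI; rewrite sym hQC.
    case: hQ => hQ.
    - have [i iIh ci] := h4 hQ c cCh.
      have iC : i \in C.
        case/orP: (sp_cov i sp) => // iI'.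
        by have := ind _ _ cI iI'; rewrite ci.
      have : i != q1 by apply/negP => /eqP E; subst; exact: nIQ iIh q1Q.
      rewrite eq_sym => /(cl _ _ (qC _ q1Q) iC); by rewrite (negbTE (hQI _ _ q1Q iIh)).
    - exact: (negP (hQ _ _ q1Q q2Q)) (cl _ _ (qC _ q1Q) (qC _ q2Q) q12).
  split=> // i iIh; case/orP: (sp_cov i sp) => // iC; exfalso.
  have qI q : q \in Qh -> q \in I.
    move=> qQ; case/orP: (sp_cov q sp) => // qC.
    have : q != i by apply/negP => /eqP E; subst; exact: nIQ iIh qQ.
    by move/(cl _ _ qC iC); rewrite (negbTE (hQI _ _ qQ iIh)).
  case: hQ => hQ.
  - by have := ind _ _ (qI _ q1Q) (qI _ q2Q); rewrite (hQ _ _ q1Q q2Q q12).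
  - have [c cCh ic] := h5 hQ i iIh.
    have cI : c \in I.
      case/orP: (sp_cov c sp) => // cC'.
      have : i != c by apply/negP => /eqP E; subst; exact: nCI cCh iIh.
      by move/(cl _ _ iC cC'); rewrite (negbTE ic).
    exact: sp_dis sp (KC _ cCh) cI.
have K2 : forall q, q \in Qh ->
    (exists C I, split_partition e C I /\ q \in C) /\
    (exists C I, split_partition e C I /\ q \in I).
  move=> q qQ; case: hQ => hQ; split.
  - exists (Ch :|: Qh), Ih; split; last by rewrite inE qQ orbT.
    apply: mk_sp => //.
    + by move=> x; rewrite inE => /orP[] a b; [exact: nCI a b | exact: nIQ b a].
    + move=> x; rewrite inE; by case/or3P: (cv x) => ->; rewrite ?orbT.
    + move=> x y; rewrite !inE => /orP[] xa /orP[] ya xy.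
      * exact: cC.
      * by rewrite sym hQC.
      * exact: hQC.
      * exact: hQ.
  - exists (Ch :|: (Qh :\ q)), (q |: Ih); split; last by rewrite !inE eqxx.
    apply: mk_sp.
    + move=> x; rewrite !inE => /orP[xa|/andP[xq xQ]] /orP[/eqP xb|xb].
      * by subst; exact: nCQ xa qQ.
      * exact: nCI xa xb.
      * by rewrite xb eqxx in xq.
      * exact: nIQ xb xQ.
    + move=> x; rewrite !inE; case: (x =P q) => [->|_] /=; first by rewrite orbT.
      by case/or3P: (cv x) => ->; rewrite ?orbT.
    + move=> x y; rewrite !inE => /orP[xa|/andP[_ xa]] /orP[ya|/andP[_ ya]] xy.
      * exact: cC.
      * by rewrite sym hQC.
      * exact: hQC.
      * exact: hQ.
    + move=> x y; rewrite !inE => /orP[/eqP->|xa] /orP[/eqP->|ya].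
      * by rewrite irr.
      * exact: hQI.
      * by rewrite sym hQI.
      * exact: iI.
  - exists (q |: Ch), (Ih :|: (Qh :\ q)); split; last by rewrite !inE eqxx.
    apply: mk_sp.
    + move=> x; rewrite !inE => /orP[/eqP xa|xa] /orP[xb|/andP[xq xQ]].
      * by subst; exact: nIQ xb qQ.
      * by rewrite xa eqxx in xq.
      * exact: nCI xa xb.
      * exact: nCQ xa xQ.
    + move=> x; rewrite !inE; case: (x =P q) => [->|_] /=; first by [].
      by case/or3P: (cv x) => ->; rewrite ?orbT.
    + move=> x y; rewrite !inE => /orP[/eqP->|xa] /orP[/eqP->|ya] xy.
      * by rewrite eqxx in xy.
      * exact: hQC.
      * by rewrite sym hQC.
      * exact: cC.
    + move=> x y; rewrite !inE => /orP[xa|/andP[_ xa]] /orP[ya|/andP[_ ya]].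
      * exact: iI.
      * by rewrite sym hQI.
      * exact: hQI.
      * exact: hQ.
  - exists Ch, (Ih :|: Qh); split; last by rewrite inE qQ orbT.
    apply: mk_sp => //.
    + by move=> x a; rewrite inE => /orP[] b; [exact: nCI a b | exact: nCQ a b].
    + move=> x; rewrite inE; by case/or3P: (cv x) => ->; rewrite ?orbT.
    + move=> x y; rewrite !inE => /orP[] xa /orP[] ya.
      * exact: iI.
      * by rewrite sym hQI.
      * exact: hQI.
      * exact: hQ.
have [[C0 [I0 [sp0 _]]] _] := K2 _ q1Q.
split; first by exists C0, I0.
split; [|split].
- move=> v; split; last by move=> vC C I sp; case: (K1 _ _ sp) => + _; apply.
  move=> H; case/or3P: (cv v) => // vv.
  + by exfalso; exact: sp_dis sp0 (H _ _ sp0) ((K1 _ _ sp0).2 _ vv).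
  + have [_ [C [I [sp vI]]]] := K2 _ vv; exfalso; exact: sp_dis sp (H _ _ sp) vI.
- move=> v; split; last by move=> vI C I sp; case: (K1 _ _ sp) => _; apply.
  move=> H; case/or3P: (cv v) => // vv.
  + by exfalso; exact: sp_dis sp0 ((K1 _ _ sp0).1 _ vv) (H _ _ sp0).
  + have [[C [I [sp vC]]] _] := K2 _ vv; exfalso; exact: sp_dis sp vC (H _ _ sp).
- move=> v; split; last exact: K2.
  move=> [[C [I [sp vC]]] [C' [I' [sp' vI]]]].
  case/or3P: (cv v) => // vv; exfalso.
  + exact: sp_dis sp' ((K1 _ _ sp').1 _ vv) vI.
  + exact: sp_dis sp vC ((K1 _ _ sp).2 _ vv).
Qed.
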